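(* Let $n\ge2$, $m_1,\dots,m_n\ge1$, $X_i=\{0,\dots,m_i-1\}$, and let $T$ be the rooted tree whose level-$i$ vertices ($0\le i\le n$) are the words $x_1\cdots x_i$ with $x_j\in X_j$, the parent of $x_1\cdots x_i$ being $x_1\cdots x_{i-1}$; identify its last level $L_n$ with $X_1\times\cdots\times X_n$. Let $\bar p(x,y)$ ($x,y\in L_n$) be the insect transition probability, and $\alpha_1,\dots,\alpha_n$ as in the context. Set $p^0_i=\alpha_1\alpha_2\cdots\alpha_{n-i}(1-\alpha_{n-i+1})$ for $i=1,\dots,n-1$ and $p^0_n=1-\alpha_1$, and let $P$ be the nested product $$P=\sum_{i=1}^np^0_i\,(I_1\otimes\cdots\otimes I_{i-1}\otimes J_i\otimes J_{i+1}\otimes\cdots\otimes J_n),$$ i.e. $p(x,y)=\sum_{i=1}^np^0_i\big(\prod_{j<i}\delta(x_j,y_j)\big)\frac{1}{m_im_{i+1}\cdots m_n}$. Then $p(x,y)=\bar p(x,y)$ for all $x,y\in L_n$.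
   Context: Simple random walk on $T$: from each vertex move to a uniformly chosen neighbour (neighbours are parent and children). For $x,y\in L_n$, $\bar p(x,y)$ is the probability that the simple random walk started at $x$ is at $y$ at the first time $t\ge1$ at which it lies in $L_n$. Let $x_0=(0,\dots,0)\in L_n$ and for $0\le j\le n$ let $\xi_j$ be the ancestor of $x_0$ at level $n-j$ (so $\xi_0=x_0$, $\xi_n$ the root). For $1\le j\le n-1$, $\alpha_j$ is the probability that the simple random walk started at $\xi_j$ visits $\xi_{j+1}$ before visiting $L_n$; set $\alpha_n=0$. $I_i$ is the identity and $J_i$ the $m_i\times m_i$ matrix with all entries $1/m_i$; $\delta(a,b)=1$ if $a=b$ and $0$ otherwise. *)

(* Defs.v *)
From HB Require Import structures.
From mathcomp Require Import all_boot all_order all_algebra.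
From mathcomp Require Import all_classical all_reals all_analysis.
Set Implicit Arguments. Unset Strict Implicit. Unset Printing Implicit Defensive.
Import Order.TTheory GRing.Theory Num.Theory.
Import numFieldNormedType.Exports.
Local Open Scope ring_scope.

(* The tree T: vertices are words (seq nat) x_1...x_i, 0 <= i <= n, with
   x_j < m j (m is indexed 1-based: m j = m_j). *)

Section Tree.
Variables (R : realType) (n : nat) (m : nat -> nat).

Definition nbrs (u : seq nat) : seq (seq nat) :=
  (if size u is k.+1 then [:: take k u] else [::]) ++
  (if (size u < n)%N then [seq rcons u a | a <- iota 0 (m (size u).+1)]
   else [::]).

Definition deg (u : seq nat) : nat := size (nbrs u).

(* fh A t u y = probability that the simple random walk started at u
   enters the set A for the first time among times s >= 1 at time t,
   and is then at y.  (First-step decomposition of the path probabilities.) *)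
Fixpoint fh (A : pred (seq nat)) (t : nat) (u y : seq nat) : R :=
  match t with
  | 0 => 0
  | t'.+1 => \sum_(w <- nbrs u)
       (deg u)%:R^-1 *
       (if A w then ((t' == 0%N) && (w == y))%:R else fh A t' w y)
  end.

Definition hitprob (A : pred (seq nat)) (u y : seq nat) : R :=
  limn (series (fun t => fh A t u y)).

Definition inLn (w : seq nat) : bool := size w == n.

Definition pbar (x y : seq nat) : R := hitprob inLn x y.

Definition x0 : seq nat := nseq n 0%N.
Definition xi (j : nat) : seq nat := take (n - j) x0.

Definition alpha (j : nat) : R :=
  if (1 <= j <= n.-1)%N then
    hitprob (fun w => inLn w || (w == xi j.+1)) (xi j) (xi j.+1)
  else 0.

Definition p0 (i : nat) : R :=
  if i == n then 1 - alpha 1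
  else (\prod_(1 <= k < (n - i).+1) alpha k) * (1 - alpha (n - i).+1).

Definition pnest (x y : seq nat) : R :=
  \sum_(1 <= i < n.+1)
     p0 i * (\prod_(j < i.-1) (nth 0%N x j == nth 0%N y j)%:R)
          / (\prod_(i <= k < n.+1) (m k)%:R).

End Tree.

Definition leaf (n : nat) (m : nat -> nat) (x : seq nat) : Prop :=
  size x = n /\ forall j, (j < n)%N -> (nth 0%N x j < m j.+1)%N.

(* Main.v *)
Require Import Defs.
From HB Require Import structures.
From mathcomp Require Import all_boot all_order all_algebra.
From mathcomp Require Import all_classical all_reals all_analysis.
From mathcomp Require Import zify ring lra.
Set Implicit Arguments. Unset Strict Implicit. Unset Printing Implicit Defensive.
Import Order.TTheory GRing.Theory Num.Theory.
Import numFieldNormedType.Exports.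
Local Open Scope ring_scope.


Lemma sum_seq_const (R : numDomainType) (T : Type) (s : seq T) (c : R) :
  \sum_(w <- s) c = c *+ size s.
Proof. by elim: s => [|a s IH]; rewrite ?big_nil ?big_cons ?IH ?mulrS. Qed.

Section Hit.
Variables (R : realType) (n : nat) (m : nat -> nat).
Variables (A : pred (seq nat)) (y : seq nat).

Let S N u := series (fun t => fh R n m A t u y) N.

Lemma fh_ge0 t u : 0 <= fh R n m A t u y.
Proof.
elim: t u => [|t IH] u /=; first by [].
apply: sumr_ge0 => w _; apply: mulr_ge0; first by rewrite invr_ge0.
by case: (A w) => //; apply: ler0n.
Qed.

Lemma S_step N u : S N.+2 u = \sum_(w <- nbrs n m u) (deg n m u)%:R^-1 *
   (if A w then (w == y)%:R else S N.+1 w).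
Proof.
rewrite /S /series /= big_nat_recl //= add0r.
under eq_bigr do rewrite /=.
rewrite exchange_big /=; apply: eq_bigr => w _.
rewrite -mulr_sumr; congr (_ * _).
case: (A w).
  by rewrite big_nat_recl //= big1_eq addr0.
done.
Qed.

Lemma S_ge0 N u : 0 <= S N u.
Proof. by rewrite /S /series /=; apply: sumr_ge0 => i _; apply: fh_ge0. Qed.

Lemma S_le1 N u : S N u <= 1.
Proof.
elim: N u => [|N IH] u; first by rewrite /S /series /= big_nil.
case: N IH => [|N] IH.
  by rewrite /S /series /= big_nat1 /=.
rewrite S_step.
have H : \sum_(w <- nbrs n m u) (deg n m u)%:R^-1 *
   (if A w then (w == y)%:R else S N.+1 w) <= \sum_(w <- nbrs n m u) (deg n m u)%:R^-1 * 1.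
  apply: ler_sum => w _; apply: ler_wpM2l; first by rewrite invr_ge0.
  case: (A w) => //; by case: (w == y).
apply: (le_trans H); rewrite -mulr_sumr sum_seq_const /deg.
case: (size (nbrs n m u)) => [|k]; first by rewrite mulr0.
by rewrite mulVf // pnatr_eq0.
Qed.

Lemma S_nd u : nondecreasing_seq (S ^~ u).
Proof.
apply: nondecreasing_series => k _ _; exact: fh_ge0.
Qed.

Lemma S_cvg u : cvgn (S ^~ u).
Proof.
apply: nondecreasing_is_cvgn; first exact: S_nd.
by exists 1 => _ [N _ <-]; apply: S_le1.
Qed.

Lemma hit_eqn u : hitprob R n m A u y = \sum_(w <- nbrs n m u) (deg n m u)%:R^-1 *
   (if A w then (w == y)%:R else hitprob R n m A w y).
Proof.
rewrite /hitprob; apply: cvg_lim => //.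
rewrite -(cvg_shiftn 2) /=.
have -> : (fun k => series (fun t => fh R n m A t u y) (k + 2)%N) =
   (fun k => \sum_(w <- nbrs n m u) (deg n m u)%:R^-1 *
   (if A w then (w == y)%:R else S k.+1 w)).
  by apply: funext => k; rewrite addn2 -S_step.
elim: (nbrs n m u) => [|w s IH].
  under eq_cvg do rewrite big_nil. rewrite big_nil; exact: cvg_cst.
under eq_cvg do rewrite big_cons. rewrite big_cons.
apply: cvgD => //; apply: cvgMl_tmp.
case: (A w); first exact: cvg_cst.
have H := @S_cvg w; rewrite -(cvg_shiftS) in H.
exact: H.
Qed.
End Hit.

Lemma sum_mem_le (R : numDomainType) (T : eqType) (s : seq T) (F : T -> R) x :
  (forall w, w \in s -> 0 <= F w) -> x \in s -> F x <= \sum_(w <- s) F w.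
Proof.
elim: s => [|a s IH] //= H; rewrite in_cons big_cons => /orP [/eqP ->|xs].
  by rewrite lerDl big_seq; apply: sumr_ge0 => w ws; apply: H; rewrite in_cons ws orbT.
rewrite -[F x]add0r; apply: lerD; first by apply: H; rewrite in_cons eqxx.
by apply: IH => // w ws; apply: H; rewrite in_cons ws orbT.
Qed.

Lemma argmax (R : realDomainType) (T : eqType) (s : seq T) (P : pred T) (f : T -> R) :
  (exists x, x \in s /\ P x) ->
  exists x, [/\ x \in s, P x & forall v, v \in s -> P v -> f v <= f x].
Proof.
elim: s => [|a s IH]; first by case=> x [].
move=> [x0 [x0in Px0]].
have [[x [xs Px]]|none] := pselect (exists x, x \in s /\ P x).
  have [z [zs Pz zmax]] := IH (ex_intro _ x (conj xs Px)).
  case Pa: (P a); last first.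
    exists z; split => //; first by rewrite in_cons zs orbT.
    move=> v; rewrite in_cons => /orP [/eqP ->|vs]; first by rewrite Pa.
    exact: zmax.
  case: (leP (f a) (f z)) => hle.
    exists z; split => //; first by rewrite in_cons zs orbT.
    move=> v; rewrite in_cons => /orP [/eqP ->|vs] //; exact: zmax.
  exists a; split => //; first by rewrite in_cons eqxx.
  move=> v; rewrite in_cons => /orP [/eqP ->|vs Pv] //.
  by apply: le_trans (zmax v vs Pv) (ltW hle).
have Pa : P a.
  move: x0in; rewrite in_cons => /orP [/eqP <-|x0s] //.
  by exfalso; apply: none; exists x0.
exists a; split => //; first by rewrite in_cons eqxx.
move=> v; rewrite in_cons => /orP [/eqP ->|vs Pv] //.
by exfalso; apply: none; exists v.
Qed.

Section Uniq.
Variables (R : realType) (n : nat) (m : nat -> nat).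
Variables (A : pred (seq nat)) (y : seq nat).

Definition harm (f : seq nat -> R) u := f u = \sum_(w <- nbrs n m u)
  (deg n m u)%:R^-1 * (if A w then (w == y)%:R else f w).

Lemma uniq_harm (S : pred (seq nat)) (W : seq (seq nat)) f g :
 (forall u, S u -> u \in W) ->
 (forall u w, S u -> w \in nbrs n m u -> A w || S w) ->
 (forall u, S u -> exists2 w, w \in nbrs n m u &
      A w || (S w && (size w == (size u).+1))) ->
 (forall u, S u -> (size u < n)%N) ->
 (forall u, S u -> harm f u) -> (forall u, S u -> harm g u) ->
 forall u, S u -> f u = g u.
Proof.
move=> SW Scl Sdesc Ssz hf hg.
pose d := fun u => f u - g u.
have hd : forall u, S u -> d u = \sum_(w <- nbrs n m u)
    (deg n m u)%:R^-1 * (if A w then 0 else d w).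
  move=> u Su; rewrite /d (hf u Su) (hg u Su) -sumrB; apply: eq_bigr => w _.
  by case: (A w); rewrite ?subrr ?mulr0 // mulrBr.
move=> u0 Su0.
have [x [xW Sx xmax]] := argmax (fun v => `|d v|) (ex_intro _ u0 (conj (SW _ Su0) Su0)).
pose M := `|d x|.
have M0 : 0 <= M by apply: normr_ge0.
have key : forall k u, S u -> (n - size u <= k)%N -> `|d u| = M -> M <= 0.
  elim=> [|k IH] u Su hk hu.
    by have := Ssz u Su; lia.
  have [w0 w0in hw0] := Sdesc u Su.
  pose c := (deg n m u)%:R^-1 : R.
  pose t := fun w => if A w then 0 else `|d w|.
  have tle : forall w, w \in nbrs n m u -> t w <= M.
    move=> w win; rewrite /t; case Aw: (A w) => //.
    have := Scl u w Su win; rewrite Aw /= => Sw.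
    exact: xmax (SW _ Sw) Sw.
  have degpos : (0 < deg n m u)%N.
    by rewrite /deg; case: (nbrs n m u) w0in.
  have c0 : 0 < c by rewrite /c invr_gt0 ltr0n.
  have cdeg : c * (deg n m u)%:R = 1 by rewrite /c mulVf // pnatr_eq0 -lt0n.
  have h1 : M <= \sum_(w <- nbrs n m u) c * t w.
    rewrite -hu hd //; apply: le_trans (ler_norm_sum _ _ _) _.
    apply: ler_sum => w _; rewrite normrM ger0_norm ?(ltW c0) // /t.
    by case: (A w); rewrite ?normr0.
  have h2 : \sum_(w <- nbrs n m u) c * t w =
      M - \sum_(w <- nbrs n m u) c * (M - t w).
    under [X in _ = _ - X]eq_bigr do rewrite mulrBr.
    rewrite sumrB sum_seq_const -/(deg n m u) -mulr_natr -mulrA (mulrC M) mulrA cdeg mul1r.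
    by rewrite opprB addrC subrK.
  have h3 : c * (M - t w0) <= \sum_(w <- nbrs n m u) c * (M - t w).
    apply: (sum_mem_le (F := fun w => c * (M - t w))) => // w win.
    by apply: mulr_ge0; [exact: ltW|rewrite subr_ge0; exact: tle].
  have h4 : M <= t w0.
    have : c * (M - t w0) <= 0 by lra.
    by rewrite pmulr_rle0 // subr_le0.
  move: hw0 h4; rewrite /t; case: (A w0) => //= /andP [Sw0 /eqP szw0] h4.
  apply: (IH w0) => //; first by rewrite szw0; lia.
  by apply/eqP; rewrite eq_le h4 xmax // SW.
have := xmax u0 (SW _ Su0) Su0.
have := key _ x Sx (leqnn _) erefl.
move=> h1 h2.
have : `|d u0| <= 0 by apply: le_trans h2 h1.
by rewrite normr_le0 /d subr_eq0 => /eqP.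
Qed.
End Uniq.



Section Tree2.
Variables (R : realType) (n : nat) (m : nat -> nat).

Definition vb (u : seq nat) : bool :=
  all (fun j => (nth 0%N u j < m j.+1)%N) (iota 0 (size u)).

Lemma vbP u : reflect (forall j, (j < size u)%N -> (nth 0%N u j < m j.+1)%N) (vb u).
Proof.
apply: (iffP allP) => H j; first by move=> hj; apply: H; rewrite mem_iota.
by rewrite mem_iota => /andP [_ hj]; apply: H.
Qed.

Lemma vb_take k u : vb u -> vb (take k u).
Proof.
move=> /vbP H; apply/vbP => j; case: (ltnP k (size u)) => hk.
  rewrite size_take hk => hj; rewrite nth_take //; apply: H; lia.
rewrite take_oversize //; exact: H.
Qed.

Lemma vb_rcons u a : vb u -> (a < m (size u).+1)%N -> vb (rcons u a).
Proof.
move=> /vbP H ha; apply/vbP => j; rewrite size_rcons ltnS => hj; rewrite nth_rcons.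
case: (ltnP j (size u)) => hj1; first by apply: H.
have hj2 : j = size u by lia.
by rewrite hj2 eqxx.
Qed.

Fixpoint words (k : nat) : seq (seq nat) :=
  if k is k'.+1 then [seq rcons u a | u <- words k', a <- iota 0 (m k'.+1)]
  else [:: [::]].

Lemma words_mem k u : size u = k -> vb u -> u \in words k.
Proof.
elim: k u => [|k IH] u.
  by case: u.
case/lastP: u => [|u a] //; rewrite size_rcons => -[hs] /vbP H /=.
apply: allpairs_f; first apply: IH => //.
  apply/vbP => j hj; have := H j; rewrite size_rcons nth_rcons hj; apply; lia.
rewrite mem_iota add0n /=; have := H (size u); rewrite size_rcons nth_rcons ltnn eqxx hs.
by apply.
Qed.

Definition Wall : seq (seq nat) := [seq w | k <- iota 0 n, w <- words k].

Lemma Wall_mem u : (size u < n)%N -> vb u -> u \in Wall.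
Proof.
move=> hs hv; apply/allpairsPdep; exists (size u), u; split => //.
  by rewrite mem_iota.
exact: words_mem.
Qed.

Lemma nbrs_sum (F : seq nat -> R) u : (size u < n)%N ->
  \sum_(w <- nbrs n m u) F w = (if size u is k'.+1 then F (take k' u) else 0) +
     \sum_(a <- iota 0 (m (size u).+1)) F (rcons u a).
Proof.
move=> hs; rewrite /nbrs hs big_cat big_map; congr (_ + _).
case: (size u) => [|k]; rewrite ?big_nil // big_cons big_nil; exact: addr0.
Qed.

Lemma deg_eq u : (size u < n)%N ->
  deg n m u = ((size u != 0%N) + m (size u).+1)%N.
Proof.
move=> hs; rewrite /deg /nbrs hs size_cat size_map size_iota.
by case: (size u).
Qed.

Lemma nbrs_leaf u : (0 < n)%N -> size u = n -> nbrs n m u = [:: take n.-1 u].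
Proof.
move=> hn hs; rewrite /nbrs hs ltnn cats0.
by case: n hn hs.
Qed.

Lemma deg_leaf u : (0 < n)%N -> size u = n -> deg n m u = 1%N.
Proof. by move=> hn hs; rewrite /deg nbrs_leaf. Qed.

Lemma mem_nbrs u w : (size u < n)%N -> w \in nbrs n m u ->
  (exists k, size u = k.+1 /\ w = take k u) \/
  (exists2 a, (a < m (size u).+1)%N & w = rcons u a).
Proof.
move=> hs; rewrite /nbrs hs mem_cat => /orP [|/mapP [a ha ->]].
  case E: (size u) => [|k] //; rewrite in_cons orbF => /eqP ->.
  by left; exists k.
by right; exists a => //; move: ha; rewrite mem_iota.
Qed.

Lemma parent_in u k : size u = k.+1 -> take k u \in nbrs n m u.
Proof. by move=> hs; rewrite /nbrs hs mem_cat in_cons eqxx. Qed.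

Lemma child_in u a : (size u < n)%N -> (a < m (size u).+1)%N -> rcons u a \in nbrs n m u.
Proof.
by move=> hs ha; rewrite /nbrs hs mem_cat; apply/orP; right; apply: map_f; rewrite mem_iota.
Qed.

End Tree2.

Lemma take_rcons_le (u : seq nat) a k : (k <= size u)%N -> take k (rcons u a) = take k u.
Proof.
move=> hk; rewrite -cats1 take_cat; case: ltnP => // h.
have -> : k = size u by apply/eqP; rewrite eqn_leq hk h.
by rewrite subnn take0 cats0 take_size.
Qed.



Section Main.
Variables (R : realType) (n : nat) (m : nat -> nat).
Hypothesis hn : (2 <= n)%N.
Hypothesis hm : forall i, (1 <= i <= n)%N -> (1 <= m i)%N.

Fixpoint g (d : nat) : R :=
  if d is d'.+1 then (1 + (m (n - d'))%:R * (1 - g d'))^-1 else 0.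

Lemma g01 d : 0 <= g d <= 1.
Proof.
elim: d => [|d IH] /=; first by rewrite lexx ler01.
have hD : 1 <= 1 + (m (n - d))%:R * (1 - g d).
  rewrite lerDl; apply: mulr_ge0 => //; rewrite subr_ge0; by case/andP: IH.
have hD0 : 0 < 1 + (m (n - d))%:R * (1 - g d) by apply: lt_le_trans hD.
by rewrite invr_ge0 (ltW hD0) /= invf_le1.
Qed.

Lemma g_rec d : g d.+1 * (1 + (m (n - d))%:R * (1 - g d)) = 1.
Proof.
have hD : 1 <= 1 + (m (n - d))%:R * (1 - g d).
  rewrite lerDl; apply: mulr_ge0 => //; rewrite subr_ge0; by case/andP: (g01 d).
by rewrite /= mulVf // gt_eqF // (lt_le_trans ltr01 hD).
Qed.

Lemma xi_nseq j : (j <= n)%N -> xi n j = nseq (n - j) 0%N.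
Proof. by move=> hj; rewrite /xi /x0 take_nseq // leq_subr. Qed.

Lemma alpha_g j : (1 <= j <= n.-1)%N -> alpha R n m j = g j.
Proof.
move=> hj; rewrite /alpha hj.
have hjn : (j < n)%N by lia.
pose k0 := (n - j)%N.
pose Pa s := \prod_(k0 <= t < s.+1) g (n - t).
pose cand := fun u : seq nat => Pa (size u).
pose S := fun u : seq nat => [&& (size u < n)%N, vb m u & take k0 u == nseq k0 0%N].
pose Aj := fun w => inLn n w || (w == xi n j.+1).
have xj1 : xi n j.+1 = nseq k0.-1 0%N by rewrite xi_nseq //; congr nseq; lia.
have Sge : forall u, S u -> (k0 <= size u)%N.
  move=> u /and3P [_ _ /eqP h]; have := congr1 size h.
  rewrite size_take size_nseq; case: (ltnP k0 (size u)) => hh; [by rewrite ltnW | by move=> ->].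
have Sxi : S (xi n j).
  rewrite /S xi_nseq ?(ltnW hjn) // size_nseq take_nseq // eqxx andbT.
  have -> : (n - j < n)%N by lia.
  apply/vbP => i; rewrite size_nseq => hi; rewrite nth_nseq hi; apply: hm; lia.
have -> : g j = cand (xi n j).
  rewrite /cand xi_nseq ?(ltnW hjn) // size_nseq /Pa big_nat1; congr g; lia.
have := @uniq_harm R n m Aj (xi n j.+1) S (Wall n m)
   (fun u => hitprob R n m Aj u (xi n j.+1)) cand.
move=> H; apply: (H _ _ _ _ _ _ _ Sxi).
- by move=> u /and3P [h1 h2 _]; apply: Wall_mem.
- move=> u w Su win; have := Su => /and3P [h1 h2 h3].
  case: (mem_nbrs h1 win) => [[k [hs ->]]|[a ha ->]].
    case: (ltnP k k0) => hk.
      apply/orP; left; apply/orP; right.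
      have hk1 : k = k0.-1 by have := Sge u Su; lia.
      by rewrite xj1 -hk1 -(take_takel _ (ltnW hk)) (eqP h3) take_nseq ?(ltnW hk).
    apply/orP; right; rewrite /S size_take hs ltnSn (vb_take _ h2) take_takel //.
    by rewrite h3 andbT; lia.
  case E: ((size u).+1 == n).
    by rewrite /Aj /inLn size_rcons E.
  apply/orP; right; rewrite /S size_rcons (vb_rcons h2 ha) take_rcons_le ?Sge // h3.
  by rewrite andbT; move/negbT: E; lia.
- move=> u Su; have := Su => /and3P [h1 h2 h3].
  have h0 : (0 < m (size u).+1)%N by apply: hm; lia.
  exists (rcons u 0%N); first exact: child_in.
  case E: ((size u).+1 == n); first by rewrite /Aj /inLn size_rcons E.
  rewrite size_rcons eqxx andbT /S size_rcons (vb_rcons h2 h0) take_rcons_le ?Sge // h3.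
  by apply/orP; right; rewrite !andbT; move/negbT: E; lia.
- by move=> u /and3P [].
- by move=> u _; rewrite /harm hit_eqn.
- move=> u Su; have := Su => /and3P [h1 h2 h3].
  have hk0 := Sge u Su.
  rewrite /harm nbrs_sum // deg_eq //.
  case E: (size u) => [|l]; first lia.
  rewrite E in h1 hk0.
  have hk0n : (k0 <= n)%N by lia.
  have hp : (if Aj (take l u) then (take l u == xi n j.+1)%:R else cand (take l u)) = Pa l.
    case: (ltnP l k0) => hk.
      have hk1 : l = k0.-1 by lia.
      have -> : take l u = xi n j.+1.
        by rewrite xj1 -hk1 -(take_takel _ (ltnW hk)) (eqP h3) take_nseq ?(ltnW hk).
      by rewrite /Aj eqxx orbT /Pa big_geq.
    have -> : Aj (take l u) = false.
      rewrite /Aj /inLn size_take E ltnSn xj1; apply/negbTE; rewrite negb_or.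
      apply/andP; split; first by apply/eqP; lia.
      apply/eqP => h; have := congr1 size h; rewrite size_take E ltnSn size_nseq; lia.
    by rewrite /cand size_take E ltnSn.
  have hc : forall a, (if Aj (rcons u a) then (rcons u a == xi n j.+1)%:R
                      else cand (rcons u a)) = Pa l.+2.
    move=> a; case E2: (l.+2 == n).
      rewrite /Aj /inLn size_rcons E E2 /=.
      have -> : (rcons u a == xi n j.+1) = false.
        apply/negbTE/eqP => h; have := congr1 size h; rewrite size_rcons E xj1 size_nseq; lia.
      rewrite /Pa (eqP E2) big_nat_recr //= subnn /= mulr0 //.
    have -> : Aj (rcons u a) = false.
      rewrite /Aj /inLn size_rcons E E2 xj1 /=; apply/negbTE/eqP => h.
      have := congr1 size h; rewrite size_rcons E size_nseq; lia.
    by rewrite /cand size_rcons E.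
  rewrite hp; under eq_bigr do rewrite hc.
  rewrite sum_seq_const size_iota /cand E.
  have e1 : (n - l.+1 = (n - l.+2).+1)%N by lia.
  have e2 : (n - (n - l.+2) = l.+2)%N by lia.
  rewrite /Pa (big_nat_recr l.+2) ?(big_nat_recr l.+1) //=; try lia.
  set P := \prod_(k0 <= i < l.+1) g (n - i).
  rewrite e1 /= e2 -mulr_natr natrD.
  have hM : 0 <= (m l.+2)%:R :> R by [].
  have hr' := g01 (n - l.+2); case/andP: hr' => hr0 hr1.
  set M := (m l.+2)%:R : R; set r := g (n - l.+2).
  have hD : 1 + M * (1 - r) != 0.
    by apply: lt0r_neq0; apply: (lt_le_trans ltr01); rewrite lerDl mulr_ge0 // subr_ge0.
  have hD2 : 1 + M != 0 by apply: lt0r_neq0; apply: (lt_le_trans ltr01); rewrite lerDl.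
  by field; rewrite hD hD2.
Qed.

End Main.



Lemma sum_iota_eq (R : numDomainType) b M s :
  \sum_(a <- iota s M) (a == b)%:R = ((s <= b)%N && (b < s + M)%N)%:R :> R.
Proof.
elim: M s => [|M IH] s; first by rewrite big_nil addn0; case: leqP => //= h; rewrite ltnNge h.
rewrite /= big_cons IH.
case: (eqVneq s b) => [->|ne].
  by rewrite leqnn addnS ltnS leq_addr /= ltnn addr0.
rewrite add0r addnS -addSn; congr (_%:R); congr (_ && _).
by rewrite ltn_neqAle ne.
Qed.

Section Main2.
Variables (R : realType) (n : nat) (m : nat -> nat).
Hypothesis hn : (2 <= n)%N.
Hypothesis hm : forall i, (1 <= i <= n)%N -> (1 <= m i)%N.
Variable y : seq nat.
Hypothesis hy : leaf n m y.

Definition rho t : R := alpha R n m (n - t).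

Lemma rho_n : rho n = 0.
Proof. by rewrite /rho subnn /alpha. Qed.

Lemma rho_0 : rho 0 = 0.
Proof. rewrite /rho subn0 /alpha; case: ifP => //; lia. Qed.

Lemma rho_g k : (1 <= k <= n)%N -> rho k = g R n m (n - k).
Proof.
move=> hk; rewrite /rho; case: (eqVneq k n) => [->|ne]; first by rewrite subnn /alpha.
apply: alpha_g => //; lia.
Qed.

Lemma rho_rec k : (1 <= k <= n.-1)%N ->
  rho k * (1 + (m k.+1)%:R * (1 - rho k.+1)) = 1.
Proof.
move=> hk; rewrite !rho_g; try lia.
have e1 : (n - k = (n - k.+1).+1)%N by lia.
have e2 : (n - (n - k.+1) = k.+1)%N by lia.
by rewrite e1 -[in m k.+1]e2 g_rec.
Qed.

Definition Nn l : R := \prod_(l.+1 <= s < n.+1) (m s)%:R.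
Definition En l (u : seq nat) : R := \prod_(j < l) (nth 0%N u j == nth 0%N y j)%:R.
Definition Dn k i : R := (\prod_(i <= t < k.+1) rho t) * (1 - rho i.-1).
Definition Gn k (u : seq nat) : R := \sum_(1 <= i < k.+2) Dn k i * En i.-1 u / Nn i.-1.

Lemma Nn_rec l : (l < n)%N -> Nn l = (m l.+1)%:R * Nn l.+1.
Proof. by move=> hl; rewrite /Nn big_ltn // ltnS. Qed.

Lemma Nn_n : Nn n = 1.
Proof. by rewrite /Nn big_geq. Qed.

Lemma Nn_neq0 l : Nn l != 0.
Proof.
rewrite /Nn prodf_seq_neq0; apply/allP => s; rewrite mem_index_iota => /andP [h1 h2].
rewrite pnatr_eq0 -lt0n; apply: hm; lia.
Qed.

Lemma Gn_rec k u : Gn k.+1 u = rho k.+1 * Gn k u + (1 - rho k.+1) * En k.+1 u / Nn k.+1.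
Proof.
rewrite /Gn (big_nat_recr k.+2) //= /Dn [\prod_(k.+2 <= t < k.+2) _]big_geq // mul1r; congr (_ + _).
rewrite mulr_sumr; apply: eq_big_nat => i /andP [h1 h2].
rewrite (big_nat_recr k.+1) //=.
by rewrite !mulrA [_ * rho k.+1]mulrC.
Qed.

Lemma Gn_0 u : Gn 0 u = (Nn 0)^-1.
Proof. by rewrite /Gn big_nat1 /Dn big_geq // rho_0 subr0 /En big_ord0 !mul1r. Qed.

Lemma En_ext l u v : (forall j, (j < l)%N -> nth 0%N u j = nth 0%N v j) -> En l u = En l v.
Proof. by move=> H; rewrite /En; apply: eq_bigr => j _; rewrite H. Qed.

Lemma Gn_ext k u v : (forall j, (j < k)%N -> nth 0%N u j = nth 0%N v j) -> Gn k u = Gn k v.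
Proof.
move=> H; rewrite /Gn; apply: eq_big_nat => i /andP [h1 h2].
rewrite (@En_ext _ u v) // => j hj; apply: H; lia.
Qed.

Lemma En_rcons k u a : size u = k -> En k.+1 (rcons u a) = En k u * (a == nth 0%N y k)%:R.
Proof.
move=> hs; rewrite /En big_ord_recr /= nth_rcons hs ltnn eqxx; congr (_ * _).
by apply: eq_bigr => j _; rewrite nth_rcons hs ltn_ord.
Qed.

Lemma En_take l u : (l <= size u)%N -> (l <= size y)%N ->
  En l u = (take l u == take l y)%:R.
Proof.
elim: l => [|l IH] h1 h2; first by rewrite /En big_ord0 !take0.
rewrite /En big_ord_recr /= -/(En l u) IH; try lia.
rewrite (take_nth 0%N h1) (take_nth 0%N h2) eqseq_rcons.
by case: (take l u == take l y); case: (_ == _); rewrite ?mul1r ?mul0r.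
Qed.

Lemma hys : size y = n. Proof. by case: hy. Qed.
Lemma hyv j : (j < n)%N -> (nth 0%N y j < m j.+1)%N. Proof. by case: hy => _; apply. Qed.

Lemma Gn_leaf w : size w = n -> Gn n w = (w == y)%:R.
Proof.
move=> hw; have := Gn_rec n.-1 w; rewrite prednK; last lia.
rewrite rho_n mul0r add0r subr0 mul1r Nn_n divr1 En_take ?hw ?hys // => ->.
by rewrite -{1}hw -hys !take_size.
Qed.

Lemma V_eq w : (size w <= n)%N ->
  (if inLn n w then (w == y)%:R else Gn (size w) w) = Gn (size w) w.
Proof.
rewrite /inLn; case: (eqVneq (size w) n) => [e|ne] _ //.
by rewrite e Gn_leaf.
Qed.

Definition Fc u := Gn (size u) u.

Lemma F_harm u : (size u < n)%N -> harm n m (inLn n) y Fc u.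
Proof.
move=> hs; rewrite /harm nbrs_sum // deg_eq //.
set k := size u.
have hc : forall a, (if inLn n (rcons u a) then (rcons u a == y)%:R else Fc (rcons u a)) =
   rho k.+1 * Gn k u + ((1 - rho k.+1) * En k u / Nn k.+1) * (a == nth 0%N y k)%:R.
  move=> a; rewrite /Fc V_eq size_rcons // Gn_rec En_rcons //.
  rewrite (@Gn_ext k (rcons u a) u); last by move=> j hj; rewrite nth_rcons -/k hj.
  by rewrite -!mulrA (mulrC (Nn _)^-1).
under eq_bigr do rewrite hc.
rewrite -mulr_sumr big_split /= sum_seq_const -mulr_sumr sum_iota_eq size_iota.
rewrite add0n hyv ?mulr1 /=; last lia.
rewrite /Fc -/k.
have hk : size u = k by []. clear hc; clearbody k.
have NZ := Nn_neq0.
case: k hk hs => [|l] hk hs.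
  rewrite Gn_0 /En big_ord0 add0r (Nn_rec (l := 0)) //; last lia.
  have hm1 : (m 1)%:R != 0 :> R by rewrite pnatr_eq0 -lt0n; apply: hm; lia.
  have := NZ 1%N; rewrite -[rho _ * _ *+ _]mulr_natr /=.
  move: (m 1)%:R hm1 (Nn 1) => M hM N hN.
  by field; rewrite hM hN.
rewrite V_eq; last by rewrite size_take hk ltnSn; lia.
rewrite size_take hk ltnSn (@Gn_ext l (take l u) u); last first.
  by move=> j hj; rewrite nth_take.
rewrite Gn_rec (Nn_rec (l := l.+1)); last lia.
have hr := rho_rec (k := l.+1).
have {hr} hr : rho l.+1 * (1 + (m l.+2)%:R * (1 - rho l.+2)) = 1 by apply: hr; lia.
have hN := NZ l.+2.
have hM : (m l.+2)%:R != 0 :> R by rewrite pnatr_eq0 -lt0n; apply: hm; lia.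
rewrite -[rho _ * _ *+ _]mulr_natr /= natrD.
have hM0 : 0 <= (m l.+2)%:R :> R by [].
move: hr hN hM hM0; move: (rho l.+1) (rho l.+2) (Nn l.+2) ((m l.+2)%:R : R) (Gn l u) (En l.+1 u).
move=> r r' N M G E hr hN hM hM0.
have hD : 1 + M * (1 - r') != 0 by apply/eqP => h; move: hr; rewrite h mulr0 => /eqP; rewrite eq_sym oner_eq0.
have -> : r = (1 + M * (1 - r'))^-1 by apply: (mulIf hD); rewrite hr mulVf.
have hD2 : 1 + M != 0 by apply: lt0r_neq0; apply: (lt_le_trans ltr01); rewrite lerDl.
by field; rewrite hN hM hD hD2.
Qed.

End Main2.



Lemma prod_rev (R : realType) (n : nat) (f : nat -> R) d : (d <= n)%N ->
  \prod_((n - d)%N <= t < n) f (n - t)%N = \prod_(1 <= k < d.+1) f k.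
Proof.
elim: d => [|d IH] hd; first by rewrite subn0 !big_geq.
rewrite (big_ltn (n := n)); last lia.
have -> : (n - d.+1).+1 = (n - d)%N by lia.
rewrite IH; last lia.
rewrite (big_nat_recr d.+1) //= mulrC; congr (_ * _); congr f; lia.
Qed.

Theorem proposition6p4 (R : realType) (n : nat) (m : nat -> nat)
  (hn : (2 <= n)%N) (hm : forall i, (1 <= i <= n)%N -> (1 <= m i)%N)
  (x y : seq nat) (hx : leaf n m x) (hy : leaf n m y) :
  pnest R n m x y = pbar R n m x y.
Proof.
have [hxs hxv] := hx.
have hn0 : (0 < n)%N by lia.
rewrite /pbar hit_eqn nbrs_leaf // deg_leaf // big_cons big_nil invr1 mul1r addr0.
have -> : inLn n (take n.-1 x) = false.
  by rewrite /inLn size_take hxs; case: ltnP => h; apply/negbTE; lia.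
have hts : size (take n.-1 x) = n.-1 by rewrite size_take hxs; case: ltnP => h //; lia.
have Stx : (size (take n.-1 x) < n)%N && vb m (take n.-1 x).
  rewrite hts; apply/andP; split; first lia.
  by apply: vb_take; apply/vbP => j; rewrite hxs; apply: hxv.
have := @uniq_harm R n m (inLn n) y (fun u => (size u < n)%N && vb m u) (Wall n m)
   (fun u => hitprob R n m (inLn n) u y) (Fc R n m y).
move=> H; rewrite (H _ _ _ _ _ _ _ Stx); clear H.
- rewrite /Fc hts (@Gn_ext R n m hn y n.-1 (take n.-1 x) x); last first.
    by move=> j hj; rewrite nth_take.
  rewrite /pnest /Gn prednK //; apply: eq_big_nat => i /andP [h1 h2].
  rewrite /Nn prednK //; congr (_ * _ / _).
  rewrite /Dn prednK // /p0.
  rewrite /rho.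
  have -> : (n - i.-1 = (n - i).+1)%N by lia.
  have e : i = (n - (n - i))%N by lia.
  rewrite [X in \prod_(X <= _ < n) _]e (@prod_rev R n (alpha R n m) (n - i)); last lia.
  by case: eqP => [e'|_] //; rewrite e' subnn big_geq // mul1r.
- by move=> u /andP [h1 h2]; apply: Wall_mem.
- move=> u w /andP [h1 h2] win.
  case: (mem_nbrs h1 win) => [[k [hs ->]]|[a ha ->]].
    by rewrite /inLn size_take hs ltnSn (vb_take _ h2); apply/orP; right; lia.
  rewrite /inLn size_rcons (vb_rcons h2 ha) andbT.
  by case: eqP => //= e; lia.
- move=> u /andP [h1 h2].
  have h0 : (0 < m (size u).+1)%N by apply: hm; lia.
  exists (rcons u 0%N); first exact: child_in.
  rewrite /inLn size_rcons (vb_rcons h2 h0) eqxx andbT.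
  by case: eqP => //= e; lia.
- by move=> u /andP [].
- by move=> u _; rewrite /harm hit_eqn.
- by move=> u /andP [h1 _]; exact: (F_harm R hn hm hy h1).
Qed.
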